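(* Let $G$ be a connected graph with $|G|$ vertices and let $(u,v)\in V_p$. If $r_w(u,v)=\frac{1}{|G|}$ for every $w\in V(G)$, then $d(u,v)$ is odd.
   Context: Graphs are finite, simple and connected; $d(u,v)$ denotes the shortest-path distance and $|G|$ the number of vertices. $V_p$ denotes the set of all unordered pairs $(u,v)$ of distinct vertices. A vertex $x$ resolves the pair $(u,v)$ if $d(x,u)\neq d(x,v)$. For $(u,v)\in V_p$, $R(u,v)$ is the set of all vertices resolving $(u,v)$. The resolving share of a vertex $w$ for $(u,v)$ is $r_w(u,v)=\frac{1}{|R(u,v)|}$ if $w$ resolves $u$ and $v$, and $r_w(u,v)=0$ otherwise. *)

(* Defs.v *)
From mathcomp Require Import all_boot all_order all_algebra.
Set Implicit Arguments. Unset Strict Implicit. Unset Printing Implicit Defensive.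
Import GRing.Theory Num.Theory.

Definition simple_graph (T : finType) (e : rel T) : Prop :=
  symmetric e /\ irreflexive e.

Definition connected_graph (T : finType) (e : rel T) : Prop :=
  forall x y : T, connect e x y.

Definition walk_of_length (T : finType) (e : rel T) (k : nat) (x y : T) : bool :=
  [exists p : k.-tuple T, path e x p && (last x p == y)].

(* shortest-path distance: least k (< |G|) such that a walk of length k
   from x to y exists; in a connected graph this is d(x,y). *)
Definition dist (T : finType) (e : rel T) (x y : T) : nat :=
  find (fun k => walk_of_length e k x y) (iota 0 #|T|).

Definition resolving_set (T : finType) (e : rel T) (u v : T) : {set T} :=
  [set x | dist e x u != dist e x v].

Definition resolving_share (T : finType) (e : rel T) (w u v : T) : rat :=
  if w \in resolving_set e u v then ((#|resolving_set e u v|%:R)^-1)%R else 0%R.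

(* Main.v *)
Require Import Defs.
From mathcomp Require Import all_boot all_order all_algebra.
Import GRing.Theory Num.Theory.

Set Implicit Arguments.
Section Aux.
Variables (T : finType) (e : rel T).

Lemma walkP k x y :
  reflect (exists p : seq T, [/\ size p = k, path e x p & last x p = y])
          (walk_of_length e k x y).
Proof.
apply: (iffP existsP).
  move=> [p /andP[Hp /eqP Hl]]; exists (val p); split => //; exact: size_tuple.
move=> [p [Hs Hp Hl]].
have Hs' : size p == k by apply/eqP.
exists (Tuple Hs'); by rewrite /= Hp Hl eqxx.
Qed.

Lemma walk_cat k m x y z :
  walk_of_length e k x y -> walk_of_length e m y z ->
  walk_of_length e (k + m) x z.
Proof.
move=> /walkP[p [Hs Hp Hl]] /walkP[q [Hs' Hq Hl']].
apply/walkP; exists (p ++ q); split.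
- by rewrite size_cat Hs Hs'.
- by rewrite cat_path Hp Hl Hq.
- by rewrite last_cat Hl.
Qed.

Lemma walk_sym k x y : symmetric e ->
  walk_of_length e k x y -> walk_of_length e k y x.
Proof.
move=> sym /walkP[p [Hs Hp Hl]]; apply/walkP.
exists (rev (belast x p)); split.
- by rewrite size_rev size_belast.
- have := rev_path e x p. rewrite Hl => ->.
  by rewrite (eq_path (e' := e)) // => a b /=; rewrite sym.
- case: p Hs Hp Hl => [|a p] Hs Hp Hl /=; first by rewrite -Hl.
  by rewrite rev_cons last_rcons.
Qed.

Lemma dist_le k x y : k < #|T| -> walk_of_length e k x y ->
  dist e x y <= k /\ walk_of_length e (dist e x y) x y.
Proof.
move=> Hk Hw.
set s := iota 0 #|T|.
have Hhas : has (fun k => walk_of_length e k x y) s.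
  by apply/hasP; exists k => //; rewrite mem_iota.
have Hlt : dist e x y < #|T|.
  by move: Hhas; rewrite has_find size_iota.
split.
  rewrite leqNgt; apply/negP => H.
  have := before_find 0 H. by rewrite /s nth_iota // Hw.
have := nth_find 0 Hhas. by rewrite /s nth_iota.
Qed.

Lemma dist_min j x y : j < dist e x y -> ~~ walk_of_length e j x y.
Proof.
move=> H.
have Hs : dist e x y <= #|T| by have := find_size (fun k => walk_of_length e k x y) (iota 0 #|T|); rewrite size_iota.
have := before_find 0 H. by rewrite nth_iota ?(leq_trans H Hs) // => ->.
Qed.

Lemma connect_walk x y : connect e x y ->
  exists k, k < #|T| /\ walk_of_length e k x y.
Proof.
move=> /connectP[p Hp ->].
case: (shortenP Hp) => p' Hp' Hu _.
exists (size p'); split.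
  have := max_card (mem (x :: p')). by rewrite (card_uniqP Hu).
by apply/walkP; exists p'.
Qed.
End Aux.
Arguments walk_cat {T e k m x y z}.
Arguments walk_sym {T e k x y}.
Arguments dist_le {T e k x y}.
Arguments dist_min {T e j x y}.
Arguments connect_walk {T e x y}.

Local Open Scope ring_scope.

Theorem lemma2p11 (T : finType) (e : rel T) (u v : T) :
  simple_graph e -> connected_graph e -> u != v ->
  (forall w : T, resolving_share e w u v = (#|T|%:R)^-1) ->
  odd (dist e u v).
Proof.
move=> [sym _] conn Huv Hsh.
have Hin : forall w, w \in resolving_set e u v.
  move=> w; have := Hsh w; rewrite /resolving_share.
  case: ifP => // _ /esym /eqP; rewrite invr_eq0 pnatr_eq0 => /eqP H.
  by have := max_card (pred1 u); rewrite H card1.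
have [k0 [Hk0 Hw0]] := connect_walk (conn u v).
have [Hd Hwd] := dist_le Hk0 Hw0.
have HdT : (dist e u v < #|T|)%N by apply: leq_ltn_trans Hd Hk0.
apply/negP => /negP Hev.
have Hdk : (dist e u v = (dist e u v)./2 + (dist e u v)./2)%N.
  by rewrite addnn -[in LHS](odd_double_half (dist e u v)) (negbTE Hev).
set k := (dist e u v)./2 in Hdk.
move: Hwd; rewrite Hdk => /walkP[p [Hs Hp Hl]].
set w := last u (take k p).
have Hw1 : walk_of_length e k u w.
  apply/walkP; exists (take k p); split => //.
  - by rewrite size_takel // Hs leq_addr.
  - by move: Hp; rewrite -{1}(cat_take_drop k p) cat_path => /andP[].
have Hw2 : walk_of_length e k w v.
  apply/walkP; exists (drop k p); split.
  - by rewrite size_drop Hs addnK.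
  - by move: Hp; rewrite -{1}(cat_take_drop k p) cat_path => /andP[].
  - by rewrite -Hl -{2}(cat_take_drop k p) last_cat.
have HkT : (k < #|T|)%N by apply: leq_ltn_trans HdT; rewrite [X in (_ <= X)%N]Hdk leq_addr.
have [Hwu1 Hwu2] := dist_le HkT (walk_sym sym Hw1).
have [Hwv1 Hwv2] := dist_le HkT Hw2.
have E1 : dist e w u = k.
  apply/eqP; rewrite eqn_leq Hwu1 /= leqNgt; apply/negP => H.
  have Hlt : (dist e w u + k < dist e u v)%N.
    by rewrite [X in (_ < X)%N]Hdk ltn_add2r.
  by move: (dist_min (e := e) Hlt); rewrite (walk_cat (walk_sym sym Hwu2) Hw2).
have E2 : dist e w v = k.
  apply/eqP; rewrite eqn_leq Hwv1 /= leqNgt; apply/negP => H.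
  have Hlt : (k + dist e w v < dist e u v)%N.
    by rewrite [X in (_ < X)%N]Hdk ltn_add2l.
  by move: (dist_min (e := e) Hlt); rewrite (walk_cat Hw1 Hwv2).
have := Hin w; rewrite inE E1 E2 eqxx //.
Qed.
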